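(* Let $n>3$ and let $a<b<c$ be elements of $\mathcal{C}_n$. Then the triangle $\triangle^{(n)}\{a,b,c\}$ contains two distinct elements $\alpha,\beta$ which are left-similar (i.e. $\gamma\cdot\alpha=\gamma\cdot\beta$ for every $\gamma\in\triangle^{(n)}\{a,b,c\}$) and neither of which is a right identity of $\triangle^{(n)}\{a,b,c\}$.
   Context: $\mathcal{C}_n=\{0,1,\dots,n-1\}$ with its usual order; $\widehat{\mathcal{E}}_{\mathcal{C}_n}$ is the set of all order-preserving maps $\mathcal{C}_n\to\mathcal{C}_n$ (not required to fix $0$), a semiring with $(\alpha+\beta)(x)=\max(\alpha(x),\beta(x))$ and $(\alpha\cdot\beta)(x)=\beta(\alpha(x))$. The triangle $\triangle^{(n)}\{a,b,c\}$ is the subsemiring of all $\alpha\in\widehat{\mathcal{E}}_{\mathcal{C}_n}$ with image contained in $\{a,b,c\}$. A right identity is $e$ with $\alpha\cdot e=\alpha$ for all $\alpha$ in the triangle. *)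

(* Defs.v *)
(* C_n = 'I_n with its usual order. *)
From mathcomp Require Import all_boot.
Set Implicit Arguments. Unset Strict Implicit. Unset Printing Implicit Defensive.

Definition map_n (n : nat) := {ffun 'I_n -> 'I_n}.

Definition order_preserving n (f : map_n n) : Prop :=
  forall x y : 'I_n, x <= y -> f x <= f y.

(* semiring product: (alpha . beta)(x) = beta(alpha(x)) *)
Definition smul n (alpha beta : map_n n) : map_n n :=
  [ffun x => beta (alpha x)].

Definition in_triangle n (a b c : 'I_n) (f : map_n n) : Prop :=
  order_preserving f /\ forall x, f x \in [:: a; b; c].

Definition left_similar n (a b c : 'I_n) (alpha beta : map_n n) : Prop :=
  forall gamma, in_triangle a b c gamma -> smul gamma alpha = smul gamma beta.

Definition right_identity n (a b c : 'I_n) (e : map_n n) : Prop :=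
  forall alpha, in_triangle a b c alpha -> smul alpha e = alpha.

(* Main.v *)
Require Import Defs.
From mathcomp Require Import all_boot.

Lemma exists_out n (hn : 3 < n) (a b c : 'I_n) : exists d : 'I_n, d \notin [:: a; b; c].
Proof.
suff /existsP [d Hd] : [exists d : 'I_n, d \notin [:: a; b; c]] by exists d.
case: (boolP [exists d : 'I_n, d \notin [:: a; b; c]]) => // H.
have sub : [set: 'I_n] \subset [:: a; b; c].
  apply/subsetP => x _; apply/negPn/negP => Hx; move/negP: H; apply; apply/existsP; exists x; exact Hx.
have := subset_leq_card sub; rewrite cardsT card_ord => H1.
have := card_size [:: a; b; c] => H2.
have := leq_trans H1 H2; rewrite /=; move=> H3.
by move: (leq_ltn_trans H3 hn); rewrite ltnn.
Qed.

Theorem proposition31 (n : nat) (hn : 3 < n) (a b c : 'I_n)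
  (hab : a < b) (hbc : b < c) :
  exists alpha beta : map_n n,
    in_triangle a b c alpha /\ in_triangle a b c beta /\ alpha <> beta /\
    left_similar a b c alpha beta /\
    ~ right_identity a b c alpha /\ ~ right_identity a b c beta.
Proof.
have hac : a <= c by apply: ltnW; apply: ltn_trans hab hbc.
have [d Hd] := @exists_out n hn a b c.
pose alpha : map_n n := [ffun x : 'I_n => if x < d then a else c].
pose beta : map_n n := [ffun x : 'I_n => if x <= d then a else c].
pose gb : map_n n := [ffun _ => b].
have gbT : in_triangle a b c gb.
  by split; [move=> x y _; rewrite !ffunE | move=> x; rewrite ffunE !inE eqxx orbT].
have nri : forall f : map_n n, (f b = a \/ f b = c) -> ~ right_identity a b c f.
  move=> f Hf Hr; have := Hr gb gbT => /(congr1 (fun g : map_n n => g b)).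
  rewrite !ffunE => E; case: Hf => E'; rewrite E' in E.
  - by rewrite E ltnn in hab.
  - by rewrite -E ltnn in hbc.
exists alpha, beta; split; [|split; [|split; [|split]]].
- split.
  + move=> x y Hxy; rewrite !ffunE.
    case: ifP => Hx; case: ifP => Hy //.
    by move: (leq_ltn_trans Hxy Hy); rewrite Hx.
  + by move=> x; rewrite ffunE; case: ifP; rewrite !inE eqxx ?orbT.
- split.
  + move=> x y Hxy; rewrite !ffunE.
    case: ifP => Hx; case: ifP => Hy //.
    by move: (leq_trans Hxy Hy); rewrite Hx.
  + by move=> x; rewrite ffunE; case: ifP; rewrite !inE eqxx ?orbT.
- move=> /(congr1 (fun g : map_n n => g d)); rewrite !ffunE ltnn leqnn => E.
  have := ltn_trans hab hbc; by rewrite ?E ?ltnn.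
- move=> g [_ Hg]; apply/ffunP => x; rewrite !ffunE.
  have Hne : g x != d.
    apply/negP => /eqP E; move: (Hg x); rewrite E => H; by rewrite H in Hd.
  have Hne2 : (nat_of_ord (g x) == nat_of_ord d) = false by apply/negbTE.
  by rewrite [g x <= d]leq_eqVlt Hne2.
- split; apply: nri; rewrite ffunE; case: ifP; auto.
Qed.
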